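(* Define a sequence $(a_n)_{n\ge1}$ by $a_1=1$, $a_2=2$ and $n a_n=(n+2)a_{n-1}+2(n+1)a_{n-2}$ for $n\ge 3$. Then: (a) for $n\ge 2$, the number of $\alpha\in\mathcal{ORCT}^*_n$ with no fixed points is $a_{n-1}$; (b) for $n\ge 1$, the number of $\alpha\in\mathcal{ORCT}^*_n$ with exactly one fixed point is $a_n$; (c) for $m\ge 2$, no $\alpha\in\mathcal{ORCT}^*_n$ has exactly $m$ fixed points.
   Context: $X_n=\{1,2,\dots,n\}$ with its usual order; maps are written on the right ($x\alpha$). A map $\alpha:X_n\to X_n$ is order-reversing if $x\le y$ implies $x\alpha\ge y\alpha$, and a contraction if $|x\alpha-y\alpha|\le|x-y|$ for all $x,y$. $\mathcal{ORCT}^*_n$ is the set of all order-reversing contractions $X_n\to X_n$ defined on all of $X_n$ (this includes the constant maps). A fixed point of $\alpha$ is $x$ with $x\alpha=x$. *)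

(* Defs.v *)
(* X_n = {1..n} is represented by 'I_n = {0..n-1}
   (shift by one; order, distances and fixed points are preserved). *)
From mathcomp Require Import all_boot all_order all_algebra.
Set Implicit Arguments. Unset Strict Implicit. Unset Printing Implicit Defensive.

Definition ndist (x y : nat) : nat := (x - y) + (y - x).

Definition order_reversing (n : nat) (f : {ffun 'I_n -> 'I_n}) : bool :=
  [forall x : 'I_n, forall y : 'I_n, (x <= y)%N ==> (f y <= f x)%N].

Definition contraction (n : nat) (f : {ffun 'I_n -> 'I_n}) : bool :=
  [forall x : 'I_n, forall y : 'I_n, (ndist (f x) (f y) <= ndist x y)%N].

Definition ORCT (n : nat) (f : {ffun 'I_n -> 'I_n}) : bool :=
  order_reversing f && contraction f.

Definition nfix (n : nat) (f : {ffun 'I_n -> 'I_n}) : nat :=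
  #|[set x : 'I_n | f x == x]|.

(* Main.v *)
Require Import Defs.
From mathcomp Require Import all_boot all_order all_algebra.
From mathcomp Require Import zify ring lra.
From Stdlib Require Import FunctionalExtensionality.
Set Implicit Arguments. Unset Strict Implicit. Unset Printing Implicit Defensive.

Definition nf (k L : nat) (f : {ffun 'I_k -> 'I_L}) (i : nat) : nat :=
  odflt 0%N (omap (fun j : 'I_k => val (f j)) (insub i)).

Lemma nfE k L (f : {ffun 'I_k -> 'I_L}) (j : 'I_k) : nf f j = f j.
Proof. by rewrite /nf valK. Qed.

Lemma nf_out k L (f : {ffun 'I_k -> 'I_L}) i : (k <= i)%N -> nf f i = 0%N.
Proof. move=> h; rewrite /nf insubN //; rewrite -leqNgt //. Qed.

Definition mk (k L : nat) (H : nat -> nat) : {ffun 'I_k -> 'I_L.+1} :=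
  [ffun i : 'I_k => inord (H (val i))].

Definition good (k L : nat) (F : nat -> nat) :=
  (forall i, (i < k)%N -> (F i <= L)%N) /\ (forall i, (k <= i)%N -> F i = 0%N).

Lemma nf_good k L (f : {ffun 'I_k -> 'I_L.+1}) : good k L (nf f).
Proof.
split=> i hi; last exact: nf_out.
by rewrite -[i]/(val (Ordinal hi)) nfE -ltnS.
Qed.

Lemma nf_mk k L H : good k L H -> nf (mk k L H) = H.
Proof.
move=> [h1 h2]; apply: functional_extensionality => i.
case: (ltnP i k) => hi.
  by rewrite -[i]/(val (Ordinal hi)) nfE ffunE inordK // ltnS h1.
by rewrite nf_out // h2.
Qed.

Lemma mk_nf k L (f : {ffun 'I_k -> 'I_L.+1}) : mk k L (nf f) = f.
Proof.
apply/ffunP => i; rewrite ffunE nfE; apply/val_inj; rewrite /= inordK //.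
Qed.

Lemma card_bij (T U : finType) (A : {set T}) (B : {set U}) (f : T -> U) (g : U -> T) :
  (forall x, x \in A -> f x \in B) -> (forall y, y \in B -> g y \in A) ->
  (forall x, x \in A -> g (f x) = x) -> (forall y, y \in B -> f (g y) = y) ->
  #|A| = #|B|.
Proof.
move=> hf hg hgf hfg; apply/eqP; rewrite eqn_leq; apply/andP; split.
  rewrite -(card_in_imset (f := f) (D := A)); last first.
    by move=> x y hx hy e; rewrite -(hgf x hx) -(hgf y hy) e.
  by apply: subset_leq_card; apply/subsetP => y /imsetP [x hx ->]; apply: hf.
rewrite -(card_in_imset (f := g) (D := B)); last first.
  by move=> x y hx hy e; rewrite -(hfg x hx) -(hfg y hy) e.
by apply: subset_leq_card; apply/subsetP => y /imsetP [x hx ->]; apply: hg.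
Qed.

Lemma card_nat k1 L1 k2 L2 (P1 P2 : (nat -> nat) -> bool) (Phi Psi : (nat -> nat) -> (nat -> nat)) :
  (forall F, good k1 L1 F -> P1 F -> [/\ good k2 L2 (Phi F), P2 (Phi F) & Psi (Phi F) = F]) ->
  (forall G, good k2 L2 G -> P2 G -> [/\ good k1 L1 (Psi G), P1 (Psi G) & Phi (Psi G) = G]) ->
  #|[set f : {ffun 'I_k1 -> 'I_L1.+1} | P1 (nf f)]| = #|[set g : {ffun 'I_k2 -> 'I_L2.+1} | P2 (nf g)]|.
Proof.
move=> h1 h2.
apply: (@card_bij _ _ _ _ (fun f => mk k2 L2 (Phi (nf f))) (fun g => mk k1 L1 (Psi (nf g)))).
- move=> f; rewrite !inE => hf; have [a b c] := h1 _ (nf_good f) hf.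
  by rewrite nf_mk.
- move=> g; rewrite !inE => hg; have [a b c] := h2 _ (nf_good g) hg.
  by rewrite nf_mk.
- move=> f; rewrite !inE => hf; have [a b c] := h1 _ (nf_good f) hf.
  by rewrite nf_mk // c mk_nf.
- move=> g; rewrite !inE => hg; have [a b c] := h2 _ (nf_good g) hg.
  by rewrite nf_mk // c mk_nf.
Qed.

Lemma card_split (T : finType) (P Q : pred T) :
  #|[set x | P x]| = (#|[set x | P x && Q x]| + #|[set x | P x && ~~ Q x]|)%N.
Proof.
rewrite -(cardsID [set x | Q x] [set x | P x]); f_equal; apply: eq_card => x;
by rewrite !inE; case: (P x); case: (Q x).
Qed.

Definition orc (k L : nat) (F : nat -> nat) : bool :=
  all (fun i => F i <= L)%N (iota 0 k) &&
  all (fun i => (F i.+1 <= F i)%N && (F i <= (F i.+1).+1)%N) (iota 0 k.-1).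

Lemma orcP k L F :
  reflect ((forall i, (i < k)%N -> (F i <= L)%N) /\
           (forall i, (i.+1 < k)%N -> (F i.+1 <= F i)%N /\ (F i <= (F i.+1).+1)%N))
          (orc k L F).
Proof.
apply: (iffP andP) => [[/allP h1 /allP h2]|[h1 h2]]; split.
- by move=> i hi; apply: h1; rewrite mem_iota.
- move=> i hi; have := h2 i; rewrite mem_iota /= => H.
  by case/andP: (H ltac:(lia)) => /leP ? /leP ?; split; apply/leP.
- by apply/allP => i; rewrite mem_iota => /andP[_ hi]; apply: h1.
- apply/allP => i; rewrite mem_iota => /andP[_ hi].
  by have [-> ->] := h2 i ltac:(lia).
Qed.

Definition hasfix (k : nat) (F : nat -> nat) : bool := has (fun i => F i == i) (iota 0 k).

Lemma hasfixP k F : reflect (exists i, (i < k)%N /\ F i = i) (hasfix k F).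
Proof.
apply: (iffP hasP) => [[i]|[i [hi e]]].
  by rewrite mem_iota => /andP[_ hi] /eqP e; exists i.
by exists i; rewrite ?mem_iota ?e //=.
Qed.

Lemma mono k F : (forall i, (i.+1 < k)%N -> (F i.+1 <= F i)%N /\ (F i <= (F i.+1).+1)%N) ->
  forall i d, (i + d < k)%N -> (F (i + d) <= F i)%N /\ (F i <= F (i + d) + d)%N.
Proof.
move=> h i; elim=> [|d IH] hd; first by rewrite addn0; lia.
have [a b] := IH ltac:(lia).
have [c e] := h (i + d) ltac:(lia).
rewrite addnS; lia.
Qed.

Lemma mono2 k F : (forall i, (i.+1 < k)%N -> (F i.+1 <= F i)%N /\ (F i <= (F i.+1).+1)%N) ->
  forall i j, (i <= j)%N -> (j < k)%N -> (F j <= F i)%N /\ (F i <= F j + (j - i))%N.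
Proof.
move=> h i j hij hj; have := mono h (d := j - i) (i := i).
by rewrite subnKC //; apply.
Qed.

Lemma crossing (P : nat -> bool) m : P 0 -> ~~ P m ->
  exists x, (x < m)%N /\ P x /\ ~~ P x.+1.
Proof.
move=> h0; elim: m => [|m IH] hm; first by rewrite h0 in hm.
case hPm: (P m).
  by exists m; split.
have [x [a [b c]]] := IH (negbT hPm).
by exists x; split; first lia.
Qed.

Definition S k L := [set f : {ffun 'I_k -> 'I_L.+1} | orc k L (nf f)].

Definition drop1 (F : nat -> nat) := fun y => F y.+1.
Definition cons1 (a : nat) (G : nat -> nat) := fun y => if y == 0%N then a else G y.-1.

Lemma partA k L :
  #|[set f : {ffun 'I_k.+2 -> 'I_L.+1} | orc k.+2 L (nf f) && (nf f 0 == nf f 1)]|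
  = #|S k.+1 L|.
Proof.
apply: (@card_nat _ _ _ _ (fun F => orc k.+2 L F && (F 0 == F 1))%N (orc k.+1 L)
   drop1 (fun G => cons1 (G 0%N) G)).
- move=> F [g1 g2] /andP[/orcP [o1 o2] /eqP e]; split.
  + by split=> i hi; rewrite /drop1; [apply: g1 | apply: g2]; lia.
  + apply/orcP; split=> i hi; rewrite /drop1; [apply: g1; lia| apply: o2; lia].
  + apply: functional_extensionality => y; rewrite /cons1 /drop1.
    by case: y => [|y] //=.
- move=> G [g1 g2] /orcP [o1 o2]; split.
  + split=> [[|i]|[|i]] hi //=; rewrite /cons1 /=;
     first [ by apply: g2; lia | by apply: g1; lia ].
  + apply/andP; split; last by [].
    apply/orcP; split=> [[|i]|[|i]] hi; rewrite /cons1 /=;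
     first [ lia | by exact: o2 | by apply: g1; lia ].
  + by apply: functional_extensionality => y.
Qed.

Lemma partB k L :
  #|[set f : {ffun 'I_k.+2 -> 'I_L.+2} | orc k.+2 L.+1 (nf f) && ~~ (nf f 0 == nf f 1)]|
  = #|S k.+1 L|.
Proof.
apply: (@card_nat _ _ _ _ (fun F => orc k.+2 L.+1 F && ~~ (F 0 == F 1))%N (orc k.+1 L)
   drop1 (fun G => cons1 (G 0%N).+1 G)).
- move=> F [g1 g2] /andP[/orcP [o1 o2] /eqP e].
  have [a b] := o2 0%N ltac:(lia).
  have hm := mono2 o2 (i := 1%N).
  split.
  + split=> i hi; rewrite /drop1; last by apply: g2; lia.
    have [c d] := hm i.+1 ltac:(lia) ltac:(lia). have := g1 0%N ltac:(lia). lia.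
  + apply/orcP; split=> i hi; rewrite /drop1; last by apply: o2; lia.
    have [c d] := hm i.+1 ltac:(lia) ltac:(lia). have := g1 0%N ltac:(lia). lia.
  + apply: functional_extensionality => y; rewrite /cons1 /drop1.
    case: y => [|y] //=; lia.
- move=> G [g1 g2] /orcP [o1 o2]; split.
  + split=> [[|i]|[|i]] hi //=; rewrite /cons1 /=;
     first [ by apply: g2; lia | by have := g1 0%N; lia | by have := g1 i; lia ].
  + apply/andP; split; last by rewrite /cons1 /=; lia.
    apply/orcP; split=> [[|i]|[|i]] hi; rewrite /cons1 /=;
     first [ lia | by exact: o2 | by have := g1 0%N; lia | by have := g1 i; lia ].
  + by apply: functional_extensionality => y.
Qed.

Lemma partB0 k :
  #|[set f : {ffun 'I_k.+2 -> 'I_1} | orc k.+2 0 (nf f) && ~~ (nf f 0 == nf f 1)]| = 0%N.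
Proof.
apply/eqP; rewrite cards_eq0; apply/eqP/setP => f; rewrite !inE.
apply/negP => /andP[/orcP [o1 o2] ne].
have := o1 0%N ltac:(lia); have := o1 1%N ltac:(lia); lia.
Qed.

Lemma S1 L : #|S 1 L| = L.+1.
Proof.
have -> : S 1 L = setT.
  apply/setP => f; rewrite !inE; apply/orcP; split=> [i hi|i hi]; last lia.
  by have [g _] := nf_good f; apply: g.
by rewrite cardsT card_ffun !card_ord expn1.
Qed.

Lemma Srec k L : #|S k.+2 L| = (#|S k.+1 L| + (if L is L'.+1 then #|S k.+1 L'| else 0))%N.
Proof.
rewrite /S (card_split _ (fun f : {ffun 'I_k.+2 -> 'I_L.+1} => nf f 0 == nf f 1)%N).
rewrite partA; congr (_ + _)%N.
case: L => [|L]; [exact: partB0 | exact: partB].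
Qed.

Lemma Sform k L : (k <= L.+1)%N -> (#|S k.+1 L| * 2 = 2 ^ k * (2 * L + 2 - k))%N.
Proof.
elim: k L => [|k IH] L hk; first by rewrite S1 expn0; lia.
rewrite Srec; case: L hk => [|L] hk.
  have -> : k = 0%N by lia.
  by rewrite S1.
rewrite mulnDl IH; last lia. rewrite IH; last lia.
rewrite expnS -mulnDr [(2 * 2 ^ k)%N]mulnC -mulnA; congr (_ * _)%N; lia.
Qed.

Definition PhiZ m (F : nat -> nat) := fun y =>
  if (y < m.+1)%N then (if (y < F y)%N then (F y).-1 else F y.+1) else 0%N.
Definition PsiZ m (G : nat -> nat) := fun y =>
  if (y < m.+2)%N then (if (y <= G y)%N then (G y).+1 else G y.-1) else 0%N.

Lemma ZO m :
  #|[set f : {ffun 'I_m.+2 -> 'I_m.+2} | orc m.+2 m.+1 (nf f) && ~~ hasfix m.+2 (nf f)]|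
  = #|[set f : {ffun 'I_m.+1 -> 'I_m.+1} | orc m.+1 m (nf f) && hasfix m.+1 (nf f)]|.
Proof.
apply: (@card_nat _ _ _ _ (fun F => orc m.+2 m.+1 F && ~~ hasfix m.+2 F)
   (fun G => orc m.+1 m G && hasfix m.+1 G) (PhiZ m) (PsiZ m)).
- move=> F [g1 g2] /andP[/orcP [o1 o2] /hasfixP nf0].
  have nfx : forall y, (y < m.+2)%N -> F y <> y by move=> y hy e; apply: nf0; exists y.
  split.
  + split=> i hi; rewrite /PhiZ; last by rewrite ifF //; apply/negbTE; rewrite -leqNgt.
    rewrite hi; have hq1 := g1 i ltac:(lia); have hq2 := nfx i ltac:(lia).
    have [a b] := o2 i ltac:(lia).
    case: ifP => h; lia.
  + apply/andP; split.
      apply/orcP; split=> i hi.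
        rewrite /PhiZ hi; have hq3 := g1 i ltac:(lia); have hq4 := nfx i ltac:(lia).
        have [a b] := o2 i ltac:(lia).
        case: ifP => h; lia.
      rewrite /PhiZ hi (_ : (i < m.+1)%N = true); last lia.
      have hq5 := nfx i ltac:(lia); have hq6 := nfx i.+1 ltac:(lia).
      have [a b] := o2 i ltac:(lia); have [c d] := o2 i.+1 ltac:(lia).
      case: ifP => h1; case: ifP => h2; lia.
    apply/hasfixP.
    have [x [hx [px npx]]] := @crossing (fun y => y < F y)%N m.+1
       ltac:(have hq7 := nfx 0%N ltac:(lia); lia)
       ltac:(have hq8 := nfx m.+1 ltac:(lia); have hq9 := g1 m.+1 ltac:(lia); lia).
    exists x; split; first by [].
    have hq10 := nfx x.+1 ltac:(lia). have [a b] := o2 x ltac:(lia).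
    rewrite /PhiZ hx px; lia.
  + apply: functional_extensionality => y; rewrite /PsiZ /PhiZ.
    case: (ltnP y m.+2) => hy; last by rewrite g2.
    case: (ltnP y m.+1) => hy1.
      have hq11 := nfx y hy; have [a b] := o2 y ltac:(lia).
      case h1: (y < F y)%N.
        rewrite ifT; lia.
      rewrite ifF; last lia.
      case: y hy hy1 h1 a b hq11 => [|y] hy hy1 h1 a b hq11; first lia.
      rewrite /= ltnW //.
      have [c d] := o2 y ltac:(lia).
      case: ifP => h2; lia.
    have -> : y = m.+1 by lia.
    rewrite ltn0 /= ltnSn.
    have hq12 := nfx m.+1 ltac:(lia); have [a b] := o2 m ltac:(lia).
    have hq13 := g1 m ltac:(lia). have hq13' := g1 m.+1 ltac:(lia).
    case: ifP => h2; lia.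
- move=> G [g1 g2] /andP[/orcP [o1 o2] /hasfixP [x [hx fx]]].
  have mG := mono2 o2.
  split.
  + split=> i hi; rewrite /PsiZ; last by rewrite ifF //; apply/negbTE; rewrite -leqNgt.
    rewrite hi.
    case: (ltnP i m.+1) => hi1.
      have hq14 := g1 i hi1; case: ifP => h; first lia.
      case: i hi hi1 h {hq14} => [|i] /= hi hi1 h; first lia.
      have hq15 := g1 i ltac:(lia); lia.
    rewrite g2 //; case: ifP => h; first lia.
    case: i hi hi1 h => [|i] /= hi hi1 h; first lia.
    have hq16 := g1 i ltac:(lia); lia.
  + apply/andP; split.
      apply/orcP; split=> i hi.
        rewrite /PsiZ hi.
        case: (ltnP i m.+1) => hi1.
          have hq17 := g1 i hi1; case: ifP => h; first lia.
          case: i hi hi1 h {hq17} => [|i] /= hi hi1 h; first lia.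
          have hq18 := g1 i ltac:(lia); lia.
        rewrite g2 //; case: ifP => h; first lia.
        case: i hi hi1 h => [|i] /= hi hi1 h; first lia.
        have hq19 := g1 i ltac:(lia); lia.
      rewrite /PsiZ hi (_ : (i < m.+2)%N = true); last lia.
      have hprev : (0 < i)%N -> (G i <= G i.-1)%N /\ (G i.-1 <= (G i).+1)%N.
        by move=> h; have := o2 i.-1; rewrite prednK //; apply; lia.
      have hnext : ((i.+1 < m.+1)%N /\ (G i.+1 <= G i)%N /\ (G i <= (G i.+1).+1)%N) \/
                   ((m.+1 <= i.+1)%N /\ G i.+1 = 0%N).
        case: (ltnP i.+1 m.+1) => hh; [left; split; [by []| exact: o2] | right; split; [by []| exact: g2]].
      have hv : (G i <= m)%N by apply: g1; lia.
      case: (posnP i) => hi0.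
        subst i; rewrite /=.
        case h1: (0 <= G 0)%N; case h2: (1 <= G 1)%N => /=; lia.
      have [c d] := hprev hi0.
      case h1: (i <= G i)%N; case h2: (i.+1 <= G i.+1)%N => /=; lia.
    apply/hasfixP => -[y [hy e]]; move: e; rewrite /PsiZ hy.
    case: ifP => h1; first lia.
    case: y hy h1 => [|y] /= hy h1; first lia.
    case: (ltnP y.+1 m.+1) => hh; last first.
      have hq20 := g1 y ltac:(lia); lia.
    have [a b] := o2 y hh => e.
    have ey : G y.+1 = y by lia.
    case: (leqP x y) => hxy.
      have [c d] := mG x y hxy ltac:(lia); lia.
    have [c d] := mG y.+1 x ltac:(lia) hx; lia.
  + apply: functional_extensionality => y; rewrite /PsiZ /PhiZ.
    case: (ltnP y m.+1) => hy; last by rewrite g2.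
    rewrite (_ : (y < m.+2)%N = true); last lia.
    case h1: (y <= G y)%N; first by rewrite ltnS h1.
    case: y hy h1 => [|y] hy h1; first by [].
    have [a b] := o2 y hy.
    rewrite /= (_ : (y.+1 < G y)%N = false); last lia.
    rewrite (_ : (y.+2 < m.+2)%N = true); last lia.
    case: (ltnP y.+2 m.+1) => hh.
      have [c d] := o2 y.+1 hh.
      by rewrite ifF //; lia.
    by rewrite g2.
Qed.

Lemma ORCT_orc m (f : {ffun 'I_m.+1 -> 'I_m.+1}) : ORCT f = orc m.+1 m (nf f).
Proof.
have [g1 g2] := nf_good f.
apply/idP/idP.
- case/andP => /forallP hr /forallP hc; apply/orcP; split; first exact: g1.
  move=> i hi.
  have := hr (Ordinal (ltnW hi)) => /forallP /(_ (Ordinal hi)) /implyP /= h1.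
  have := hc (Ordinal (ltnW hi)) => /forallP /(_ (Ordinal hi)) /= h2.
  have e1 : nf f i = f (Ordinal (ltnW hi)) by rewrite -nfE.
  have e2 : nf f i.+1 = f (Ordinal hi) by rewrite -nfE.
  rewrite e1 e2; move: (h1 (leqnSn i)) h2; rewrite /ndist; lia.
- case/orcP => o1 o2; have mF := mono2 o2.
  apply/andP; split; apply/forallP => x; apply/forallP => y.
    apply/implyP => hxy; rewrite -!nfE.
    by have [] := mF x y hxy (ltn_ord y).
  rewrite -!nfE /ndist.
  case: (leqP x y) => hxy.
    have [a b] := mF x y hxy (ltn_ord y); lia.
  have [a b] := mF y x (ltnW hxy) (ltn_ord x); lia.
Qed.

Lemma ex_hasfix k (f : {ffun 'I_k -> 'I_k}) : [exists x, f x == x] = hasfix k (nf f).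
Proof.
apply/existsP/hasfixP => [[x /eqP e]|[i [hi e]]].
  by exists x; split; [exact: ltn_ord | rewrite nfE e].
exists (Ordinal hi); apply/eqP/val_inj => /=; by rewrite -nfE.
Qed.

Lemma nfix_le1 n (f : {ffun 'I_n -> 'I_n}) : order_reversing f -> (nfix f <= 1)%N.
Proof.
move=> /forallP hr; apply/card_le1_eqP => x y; rewrite !inE => /eqP ex /eqP ey.
apply/val_inj; apply/eqP; rewrite eqn_leq.
case: (leqP x y) => hxy.
  have := hr x => /forallP /(_ y) /implyP /(_ hxy); rewrite ex ey => ->; by [].
have := hr y => /forallP /(_ x) /implyP /(_ (ltnW hxy)); rewrite ex ey => h.
by rewrite leqNgt hxy in h.
Qed.

Lemma nfix0 n (f : {ffun 'I_n -> 'I_n}) : (nfix f == 0%N) = ~~ [exists x, f x == x].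
Proof.
rewrite /nfix cards_eq0; apply/eqP/existsPn.
- move=> e x; apply/negP => hx.
  have : x \in [set x | f x == x] by rewrite inE.
  by rewrite e inE.
- move=> h; apply/setP => x; rewrite !inE; exact: negbTE (h x).
Qed.

Lemma nfix1 n (f : {ffun 'I_n -> 'I_n}) : order_reversing f ->
  (nfix f == 1%N) = [exists x, f x == x].
Proof.
move=> hr; have := nfix_le1 hr; have := nfix0 f.
case: (nfix f) => [|[|k]] //=.
  by move=> /esym /negbTE ->.
by move=> /esym /negbFE ->.
Qed.


Definition Zc n := #|[set f : {ffun 'I_n -> 'I_n} | ORCT f && (nfix f == 0%N)]|.
Definition Oc n := #|[set f : {ffun 'I_n -> 'I_n} | ORCT f && (nfix f == 1%N)]|.

Lemma Zc_nat m : Zc m.+1 =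
  #|[set f : {ffun 'I_m.+1 -> 'I_m.+1} | orc m.+1 m (nf f) && ~~ hasfix m.+1 (nf f)]|.
Proof. by apply: eq_card => f; rewrite !inE -ORCT_orc nfix0 ex_hasfix. Qed.

Lemma Oc_nat m : Oc m.+1 =
  #|[set f : {ffun 'I_m.+1 -> 'I_m.+1} | orc m.+1 m (nf f) && hasfix m.+1 (nf f)]|.
Proof.
apply: eq_card => f; rewrite !inE -ORCT_orc; case h: (ORCT f) => //=.
by rewrite nfix1 ?ex_hasfix //; case/andP: h.
Qed.

Lemma Ntot m : ((Zc m.+1 + Oc m.+1) * 2 = 2 ^ m * (m + 2))%N.
Proof.
have := Sform (k := m) (L := m) (leqnSn m).
rewrite /S (card_split _ (fun f : {ffun 'I_m.+1 -> 'I_m.+1} => hasfix m.+1 (nf f))).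
rewrite -Zc_nat -Oc_nat addnC => ->; congr (_ * _)%N; lia.
Qed.

Lemma Zc1 : Zc 1 = 0%N.
Proof.
rewrite Zc_nat; apply/eqP; rewrite cards_eq0; apply/eqP/setP => f; rewrite !inE.
apply/negP => /andP[/orcP[o1 _] /hasfixP nh]; apply: nh; exists 0%N.
by have := o1 0%N; lia.
Qed.

Lemma ZOc m : Zc m.+2 = Oc m.+1.
Proof. by rewrite Zc_nat Oc_nat ZO. Qed.

Lemma nat2 m x : (x * 2 = 2 ^ m.+1 * (m + 3))%N -> x = (2 ^ m * (m + 3))%N.
Proof.
move=> h; apply/eqP; rewrite -(eqn_pmul2r (_ : 0 < 2)%N) // h expnS; apply/eqP.
by rewrite -mulnA mulnC.
Qed.

Import GRing.Theory Num.Theory.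
Local Open Scope ring_scope.

Lemma asum (a : nat -> rat)
  (ha1 : a 1%N = 1) (ha2 : a 2%N = 2)
  (hrec : forall n : nat, (3 <= n)%N ->
     n%:R * a n = (n + 2)%:R * a n.-1 + 2 * (n + 1)%:R * a n.-2) :
  forall k, a k.+2 + a k.+1 = (k + 3)%:R * 2 ^+ k.
Proof.
elim=> [|k IH]; first by rewrite ha1 ha2 expr0 mulr1; rewrite (_ : 3 = 2 + 1)%N //.
have hk : (k + 3)%:R != 0 :> rat by rewrite pnatr_eq0 addn3.
apply: (mulfI hk).
have h := hrec k.+3 ltac:(lia); rewrite /= in h.
have c : forall j, j.+1%:R = j%:R + 1 :> rat by move=> j; rewrite -addn1 natrD.
rewrite !addn3 mulrDr h.
have e : a k.+2 = (k + 3)%:R * 2 ^+ k - a k.+1 by rewrite -IH; ring.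
rewrite e exprS !natrD !c; ring.
Qed.

Theorem lemma3p9 (a : nat -> rat)
  (ha1 : a 1%N = 1) (ha2 : a 2%N = 2)
  (hrec : forall n : nat, (3 <= n)%N ->
     n%:R * a n = (n + 2)%:R * a n.-1 + 2 * (n + 1)%:R * a n.-2) :
  (forall n : nat, (2 <= n)%N ->
     (#|[set f : {ffun 'I_n -> 'I_n} | ORCT f && (nfix f == 0%N)]|)%:R = a n.-1)
  /\
  (forall n : nat, (1 <= n)%N ->
     (#|[set f : {ffun 'I_n -> 'I_n} | ORCT f && (nfix f == 1%N)]|)%:R = a n)
  /\
  (forall (n m : nat), (2 <= m)%N ->
     forall f : {ffun 'I_n -> 'I_n}, ORCT f -> nfix f <> m).
Proof.
have As := asum ha1 ha2 hrec.
have Oa : forall m, (Oc m.+1)%:R = a m.+1.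
  elim=> [|m IH].
    have := Ntot 0; rewrite Zc1 add0n expn0 => h.
    by rewrite (_ : Oc 1 = 1%N) ?ha1 //; lia.
  have := Ntot m.+1; rewrite (_ : (m.+1 + 2 = m + 3)%N); last lia.
  move=> /nat2; rewrite ZOc => h.
  have e : Oc m.+2 = (2 ^ m * (m + 3) - Oc m.+1)%N by rewrite -h addKn.
  have le : (Oc m.+1 <= 2 ^ m * (m + 3))%N by rewrite -h leq_addr.
  rewrite e natrB // IH natrM natrX.
  have := As m; rewrite mulrC => <-; ring.
split; last split.
- move=> [|[|m]] // _; rewrite -/(Zc m.+2) ZOc; exact: Oa.
- move=> [|m] // _; exact: Oa.
- move=> n m hm f /andP[hr _] e.
  have := nfix_le1 hr; rewrite e; lia.
Qed.
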